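(* For every pure context $F$, term $t$ and variables $k,k',x$ with $k'\notin\mathrm{fv}(F)\cup\mathrm{fv}(t)$ and $x\notin\mathrm{fv}(F)$, we have $F[\mathcal{S}k.t] \approx \mathcal{S}k'.\,t\{\lambda x.\langle k'\,F[x]\rangle/k\}$.
   Context: The calculus $\lambda_{\mathcal S}$. Terms: $t ::= x \mid \lambda x.t \mid t\,t \mid \mathcal{S}k.t \mid \langle t\rangle$ (shift and reset); values: $v ::= \lambda x.t \mid x$. $\lambda x.t$ binds $x$, $\mathcal{S}k.t$ binds $k$; terms up to $\alpha$-conversion; $\mathrm{fv}$ free variables; capture-avoiding substitution $t\{v/x\}$. Pure contexts $F ::= [\,] \mid v\,F \mid F\,t$; evaluation contexts $E ::= [\,] \mid v\,E \mid E\,t \mid \langle E\rangle$. Reduction: $E[(\lambda x.t)\,v] \to E[t\{v/x\}]$; $E[\langle F[\mathcal{S}k.t]\rangle] \to E[\langle t\{\lambda x.\langle F[x]\rangle/k\}\rangle]$ ($x\notin\mathrm{fv}(F)$); $E[\langle v\rangle]\to E[v]$. $t\Downarrow t'$ iff $t\to^*t'$ and $t'$ irreducible. Normal forms: values, control stuck terms $F[\mathcal{S}k.t]$, open stuck terms $E[x\,v]$. Fresh: not free in the terms/contexts considered. Refined normal form bisimilarity $\approx$: for a relation $\mathcal R$ on terms, $E_0\mathrel{\mathcal R}E_1$ iff either $E_0=E_0'[\langle F_0\rangle]$, $E_1=E_1'[\langle F_1\rangle]$ ($F_i$ pure) with $E_0'[x]\mathrel{\mathcal R}E_1'[x]$ and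 $\langle F_0[x]\rangle\mathrel{\mathcal R}\langle F_1[x]\rangle$ ($x$ fresh), or $E_0=F_0$, $E_1=F_1$ pure with $F_0[x]\mathrel{\mathcal R}F_1[x]$ ($x$ fresh). $v\mathbin{@}y$ is $x\,y$ if $v=x$, $t\{y/x\}$ if $v=\lambda x.t$. $\mathcal R^{\mathrm{rnf}}$ on normal forms: $v_0\mathrel{\mathcal R^{\mathrm{rnf}}}v_1$ if $v_0\mathbin{@}x\mathrel{\mathcal R}v_1\mathbin{@}x$ ($x$ fresh); $E_0[x\,v_0]\mathrel{\mathcal R^{\mathrm{rnf}}}E_1[x\,v_1]$ if $E_0\mathrel{\mathcal R}E_1$ and $v_0\mathrel{\mathcal R^{\mathrm{rnf}}}v_1$; $F_0[\mathcal{S}k.t_0]\mathrel{\mathcal R^{\mathrm{rnf}}}F_1[\mathcal{S}k.t_1]$ if $\langle t_0\{\lambda x.\langle k'\,F_0[x]\rangle/k\}\rangle\mathrel{\mathcal R}\langle t_1\{\lambda x.\langle k'\,F_1[x]\rangle/k\}\rangle$ for fresh $k',x$. $\mathcal R$ is a refined normal form simulation if $t_0\mathrel{\mathcal R}t_1$ and $t_0\Downarrow t_0'$ imply $t_1\Downarrow t_1'$ with $t_0'\mathrel{\mathcal R^{\mathrm{rnf}}}t_1'$; a refined bisimulation if $\mathcal R$ and $\mathcal R^{-1}$ are refined simulations; $\approx$ is the largest refined normal form bisimulation. *)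

(* Defs.v *)
(* The calculus lambda_S (shift/reset) in locally nameless
   representation: bound variables are de Bruijn indices, free variables are
   names (atoms = nat).  This represents terms up to alpha-conversion while
   keeping named free variables, so freshness conditions can be stated as in
   the paper. *)
From Stdlib Require Import List Relations.
Import ListNotations.

Definition atom := nat.

Inductive term : Type :=
| BVar  : nat -> term
| FVar  : atom -> term
| Lam   : term -> term           (* \x. t  : binds index 0 in body *)
| App   : term -> term -> term
| Shift : term -> term           (* S k. t : binds index 0 in body *)
| Reset : term -> term.

Fixpoint open_rec (n : nat) (u : term) (t : term) : term :=
  match t with
  | BVar i => if Nat.eqb i n then u else BVar i
  | FVar x => FVar x
  | Lam b => Lam (open_rec (S n) u b)
  | App a b => App (open_rec n u a) (open_rec n u b)
  | Shift b => Shift (open_rec (S n) u b)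
  | Reset b => Reset (open_rec n u b)
  end.
Definition open (t u : term) : term := open_rec 0 u t.

Fixpoint close_rec (n : nat) (x : atom) (t : term) : term :=
  match t with
  | BVar i => BVar i
  | FVar y => if Nat.eqb x y then BVar n else FVar y
  | Lam b => Lam (close_rec (S n) x b)
  | App a b => App (close_rec n x a) (close_rec n x b)
  | Shift b => Shift (close_rec (S n) x b)
  | Reset b => Reset (close_rec n x b)
  end.
Definition close (x : atom) (t : term) : term := close_rec 0 x t.

Definition lam (x : atom) (t : term) : term := Lam (close x t).
Definition shift (k : atom) (t : term) : term := Shift (close k t).

(* substitution of u for the free name x (capture-free: binders are indices) *)
Fixpoint subst (x : atom) (u : term) (t : term) : term :=
  match t with
  | BVar i => BVar i
  | FVar y => if Nat.eqb x y then u else FVar y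
  | Lam b => Lam (subst x u b)
  | App a b => App (subst x u a) (subst x u b)
  | Shift b => Shift (subst x u b)
  | Reset b => Reset (subst x u b)
  end.

Fixpoint fv (t : term) : list atom :=
  match t with
  | BVar _ => []
  | FVar x => [x]
  | Lam b => fv b
  | App a b => fv a ++ fv b
  | Shift b => fv b
  | Reset b => fv b
  end.

Fixpoint lc_at (n : nat) (t : term) : bool :=
  match t with
  | BVar i => Nat.ltb i n
  | FVar _ => true
  | Lam b => lc_at (S n) b
  | App a b => lc_at n a && lc_at n b
  | Shift b => lc_at (S n) b
  | Reset b => lc_at n b
  end.
Definition lc (t : term) : Prop := lc_at 0 t = true.

Definition is_value (t : term) : Prop :=
  match t with
  | Lam _ | FVar _ => True
  | _ => False
  end.

Inductive ctx : Type :=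
| Hole  : ctx
| CAppR : term -> ctx -> ctx
| CAppL : ctx -> term -> ctx
| CReset : ctx -> ctx.

Fixpoint plug (E : ctx) (t : term) : term :=
  match E with
  | Hole => t
  | CAppR v E' => App v (plug E' t)
  | CAppL E' u => App (plug E' t) u
  | CReset E' => Reset (plug E' t)
  end.

Fixpoint ccomp (E E' : ctx) : ctx :=
  match E with
  | Hole => E'
  | CAppR v E1 => CAppR v (ccomp E1 E')
  | CAppL E1 u => CAppL (ccomp E1 E') u
  | CReset E1 => CReset (ccomp E1 E')
  end.

Fixpoint eval_ctx (E : ctx) : Prop :=
  match E with
  | Hole => True
  | CAppR v E' => is_value v /\ eval_ctx E'
  | CAppL E' _ => eval_ctx E'
  | CReset E' => eval_ctx E'
  end.

Fixpoint pure_ctx (E : ctx) : Prop :=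
  match E with
  | Hole => True
  | CAppR v E' => is_value v /\ pure_ctx E'
  | CAppL E' _ => pure_ctx E'
  | CReset _ => False
  end.

Fixpoint fv_ctx (E : ctx) : list atom :=
  match E with
  | Hole => []
  | CAppR v E' => fv v ++ fv_ctx E'
  | CAppL E' u => fv_ctx E' ++ fv u
  | CReset E' => fv_ctx E'
  end.

Fixpoint lc_ctx (E : ctx) : Prop :=
  match E with
  | Hole => True
  | CAppR v E' => lc v /\ lc_ctx E'
  | CAppL E' u => lc_ctx E' /\ lc u
  | CReset E' => lc_ctx E'
  end.

(* the captured continuation \x.<F[x]> (x not in fv F), i.e.
   Lam (close x (Reset (plug F (FVar x)))) = Lam (Reset (plug F (BVar 0)))
   for locally closed F *)
Definition cont_of (F : ctx) : term := Lam (Reset (plug F (BVar 0))).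

Inductive step : term -> term -> Prop :=
| step_beta : forall E t v,
    eval_ctx E -> is_value v ->
    step (plug E (App (Lam t) v)) (plug E (open t v))
| step_shift : forall E F t,
    eval_ctx E -> pure_ctx F ->
    step (plug E (Reset (plug F (Shift t))))
         (plug E (Reset (open t (cont_of F))))
| step_reset : forall E v,
    eval_ctx E -> is_value v ->
    step (plug E (Reset v)) (plug E v).

Definition irreducible (t : term) : Prop := forall t', ~ step t t'.

Definition evaluates (t t' : term) : Prop :=
  clos_refl_trans term step t t' /\ irreducible t'.

Definition relation_t := term -> term -> Prop.

Definition app_at (v : term) (y : atom) : term :=
  match v with
  | Lam b => open b (FVar y)
  | _ => App v (FVar y)
  end.

Definition ctx_rel (R : relation_t) (E0 E1 : ctx) : Prop :=
  (exists E0' F0 E1' F1,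
      eval_ctx E0' /\ eval_ctx E1' /\ pure_ctx F0 /\ pure_ctx F1 /\
      E0 = ccomp E0' (CReset F0) /\ E1 = ccomp E1' (CReset F1) /\
      forall x, ~ In x (fv_ctx E0) -> ~ In x (fv_ctx E1) ->
        R (plug E0' (FVar x)) (plug E1' (FVar x)) /\
        R (Reset (plug F0 (FVar x))) (Reset (plug F1 (FVar x))))
  \/
  (pure_ctx E0 /\ pure_ctx E1 /\
   forall x, ~ In x (fv_ctx E0) -> ~ In x (fv_ctx E1) ->
     R (plug E0 (FVar x)) (plug E1 (FVar x))).

Definition rnf_value (R : relation_t) (v0 v1 : term) : Prop :=
  is_value v0 /\ is_value v1 /\
  forall x, ~ In x (fv v0) -> ~ In x (fv v1) -> R (app_at v0 x) (app_at v1 x).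

Inductive rnf (R : relation_t) : term -> term -> Prop :=
| rnf_val : forall v0 v1, rnf_value R v0 v1 -> rnf R v0 v1
| rnf_open : forall E0 E1 x v0 v1,
    eval_ctx E0 -> eval_ctx E1 ->
    ctx_rel R E0 E1 -> rnf_value R v0 v1 ->
    rnf R (plug E0 (App (FVar x) v0)) (plug E1 (App (FVar x) v1))
| rnf_control : forall F0 F1 t0 t1,
    pure_ctx F0 -> pure_ctx F1 ->
    (forall k', ~ In k' (fv_ctx F0) -> ~ In k' (fv_ctx F1) ->
                ~ In k' (fv t0) -> ~ In k' (fv t1) ->
      R (Reset (open t0 (Lam (Reset (App (FVar k') (plug F0 (BVar 0)))))))
        (Reset (open t1 (Lam (Reset (App (FVar k') (plug F1 (BVar 0))))))))
    -> rnf R (plug F0 (Shift t0)) (plug F1 (Shift t1)).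

Definition rnf_simulation (R : relation_t) : Prop :=
  forall t0 t1 t0', R t0 t1 -> evaluates t0 t0' ->
    exists t1', evaluates t1 t1' /\ rnf R t0' t1'.

Definition rnf_bisimulation (R : relation_t) : Prop :=
  rnf_simulation R /\ rnf_simulation (fun a b => R b a).

Definition rnf_bisim (t0 t1 : term) : Prop :=
  exists R, rnf_bisimulation R /\ R t0 t1.

(* Main.v *)
Require Import Defs.
From Stdlib Require Import List Relations Arith Lia Bool.
Import ListNotations.

Definition is_valb (t : term) : bool :=
  match t with Lam _ | FVar _ => true | _ => false end.

Lemma is_valb_spec t : is_valb t = true <-> is_value t.
Proof. destruct t; simpl; split; intro H; try discriminate; try contradiction; auto. Qed.

Lemma is_value_valb t : is_value t -> is_valb t = true.
Proof. apply is_valb_spec. Qed.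

Fixpoint ctrl (t : term) : option (ctx * term) :=
  match t with
  | Shift b => Some (Hole, b)
  | App a c =>
      match ctrl a with
      | Some (F, b) => Some (CAppL F c, b)
      | None => if is_valb a then
                  match ctrl c with
                  | Some (F, b) => Some (CAppR a F, b)
                  | None => None end
                else None
      end
  | _ => None
  end.

Fixpoint red (t : term) : option term :=
  match t with
  | App a c =>
      match red a with
      | Some a' => Some (App a' c)
      | None =>
        if is_valb a then
          match red c with
          | Some c' => Some (App a c')
          | None => if is_valb c then
                      match a with Lam b => Some (open b c) | _ => None end
                    else None
          end
        else None
      end
  | Reset s =>
      match red s with
      | Some s' => Some (Reset s')
      | None => if is_valb s then Some s else
                 match ctrl s with
                 | Some (F, b) => Some (Reset (open b (cont_of F)))
                 | None => None end
      end
  | _ => None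
  end.

Lemma red_val v : is_valb v = true -> red v = None.
Proof. destruct v; simpl; congruence. Qed.
Lemma ctrl_val v : is_valb v = true -> ctrl v = None.
Proof. destruct v; simpl; congruence. Qed.

Lemma plug_ccomp E E' t : plug (ccomp E E') t = plug E (plug E' t).
Proof. induction E; simpl; congruence. Qed.
Lemma eval_ccomp E E' : eval_ctx E -> eval_ctx E' -> eval_ctx (ccomp E E').
Proof. induction E; simpl; intuition. Qed.

Lemma step_ctx E : eval_ctx E -> forall a b, step a b -> step (plug E a) (plug E b).
Proof.
  intros HE a b H; destruct H; rewrite <- !plug_ccomp; constructor; auto;
  apply eval_ccomp; auto.
Qed.

Lemma plug_shift_valb F b : is_valb (plug F (Shift b)) = false.
Proof. destruct F; reflexivity. Qed.

Lemma red_ctrl_plug F b : pure_ctx F ->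
  red (plug F (Shift b)) = None /\ ctrl (plug F (Shift b)) = Some (F, b).
Proof.
  induction F; simpl; intros HF.
  - auto.
  - destruct HF as [Hv HF]. destruct (IHF HF) as [H1 H2].
    apply is_value_valb in Hv. rewrite (red_val _ Hv), Hv, H1, (ctrl_val _ Hv), H2.
    rewrite plug_shift_valb. auto.
  - destruct (IHF HF) as [H1 H2]. rewrite H1, H2, plug_shift_valb. auto.
  - contradiction.
Qed.

Lemma ctrl_spec t F b : ctrl t = Some (F, b) -> t = plug F (Shift b) /\ pure_ctx F.
Proof.
  revert F b; induction t; simpl; intros F b H; try discriminate.
  - destruct (ctrl t1) as [[F1 b1]|] eqn:E1.
    + inversion H; subst. destruct (IHt1 _ _ eq_refl) as [-> HP]. simpl; auto.
    + destruct (is_valb t1) eqn:V; [|discriminate].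
      destruct (ctrl t2) as [[F2 b2]|] eqn:E2; [|discriminate].
      inversion H; subst. destruct (IHt2 _ _ eq_refl) as [-> HP]. simpl.
      split; auto. split; auto. apply is_valb_spec; auto.
  - inversion H; subst. simpl; auto.
Qed.

Lemma red_plug E : eval_ctx E -> forall t t', red t = Some t' -> red (plug E t) = Some (plug E t').
Proof.
  induction E as [|v E IHE|E IHE u|E IHE]; simpl; intros HE s s' H.
  - auto.
  - destruct HE as [Hv HE]. apply is_value_valb in Hv.
    rewrite (red_val _ Hv), Hv, (IHE HE _ _ H). auto.
  - rewrite (IHE HE _ _ H); auto.
  - rewrite (IHE HE _ _ H); auto.
Qed.

Lemma step_red t t' : step t t' -> red t = Some t'.
Proof.
  intros H; destruct H as [E b v HE Hv|E F b HE HF|E v HE Hv].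
  - apply red_plug; auto. simpl. apply is_value_valb in Hv.
    rewrite (red_val _ Hv), Hv. reflexivity.
  - apply red_plug; auto. simpl. destruct (red_ctrl_plug F b HF) as [-> ->].
    rewrite plug_shift_valb. reflexivity.
  - apply red_plug; auto. simpl. apply is_value_valb in Hv.
    rewrite (red_val _ Hv), Hv. reflexivity.
Qed.

Lemma red_step t t' : red t = Some t' -> step t t'.
Proof.
  revert t'; induction t; simpl; intros t' H; try discriminate.
  - destruct (red t1) as [a|] eqn:R1.
    + inversion H; subst. apply (step_ctx (CAppL Hole t2)); simpl; auto.
    + destruct (is_valb t1) eqn:V1; [|discriminate].
      destruct (red t2) as [c|] eqn:R2.
      * inversion H; subst. apply (step_ctx (CAppR t1 Hole)); simpl; auto.
        split; auto. apply is_valb_spec; auto.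
      * destruct (is_valb t2) eqn:V2; [|discriminate].
        destruct t1; try discriminate. inversion H; subst.
        apply (step_beta Hole); simpl; auto. apply is_valb_spec; auto.
  - destruct (red t) as [a|] eqn:R1.
    + inversion H; subst. apply (step_ctx (CReset Hole)); simpl; auto.
    + destruct (is_valb t) eqn:V.
      * inversion H; subst. apply (step_reset Hole); simpl; auto. apply is_valb_spec; auto.
      * destruct (ctrl t) as [[F b]|] eqn:C; [|discriminate].
        inversion H; subst. destruct (ctrl_spec _ _ _ C) as [-> HP].
        apply (step_shift Hole); simpl; auto.
Qed.

Lemma step_det t u u' : step t u -> step t u' -> u = u'.
Proof. intros H1 H2. apply step_red in H1. apply step_red in H2. congruence. Qed.

Lemma irred_red t : red t = None -> irreducible t.
Proof. intros H t' Hs. apply step_red in Hs. congruence. Qed.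

Notation Kc z := (Lam (Reset (App (FVar z) (BVar 0)))).

Inductive sim : term -> term -> Prop :=
| s_bvar i : sim (BVar i) (BVar i)
| s_fvar x : sim (FVar x) (FVar x)
| s_lam a a' : sim a a' -> sim (Lam a) (Lam a')
| s_app a b a' b' : sim a a' -> sim b b' -> sim (App a b) (App a' b')
| s_shift a a' : sim a a' -> sim (Shift a) (Shift a')
| s_reset a a' : sim a a' -> sim (Reset a) (Reset a')
| s_k z a a' : sim a a' -> sim (Reset (App (FVar z) a)) (Reset (App (Kc z) a'))
| s_rr a a' : sim a a' -> sim (Reset a) (Reset (Reset a'))
| s_rv v v' : is_valb v = true -> sim v v' -> sim v (Reset v').

Inductive csim : ctx -> ctx -> Prop :=
| c_hole : csim Hole Hole
| c_appr v v' E E' : sim v v' -> csim E E' -> csim (CAppR v E) (CAppR v' E')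
| c_appl E E' u u' : csim E E' -> sim u u' -> csim (CAppL E u) (CAppL E' u')
| c_reset E E' : csim E E' -> csim (CReset E) (CReset E')
| c_k z E E' : csim E E' -> csim (CReset (CAppR (FVar z) E)) (CReset (CAppR (Kc z) E'))
| c_rr E E' : csim E E' -> csim (CReset E) (CReset (CReset E')).

Lemma sim_refl t : sim t t.
Proof. induction t; constructor; auto. Qed.

Lemma sim_plug E E' : csim E E' -> forall s s', sim s s' -> sim (plug E s) (plug E' s').
Proof.
  induction 1; simpl; intros; auto.
  - apply s_app; auto.
  - apply s_app; auto.
  - apply s_reset; auto.
  - apply s_k; auto.
  - apply s_rr; auto.
Qed.

Lemma sim_open b b' : sim b b' -> forall n u u', sim u u' ->
  sim (open_rec n u b) (open_rec n u' b').
Proof.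
  induction 1; simpl; intros n u u' Hu.
  - destruct (Nat.eqb i n); auto. constructor.
  - constructor.
  - constructor; auto.
  - constructor; auto.
  - constructor; auto.
  - constructor; auto.
  - apply (s_k z); auto.
  - apply s_rr; auto.
  - apply s_rv; auto. destruct v; simpl in *; auto; discriminate.
Qed.

Lemma sim_subst x u u' t : sim u u' -> sim (subst x u t) (subst x u' t).
Proof.
  intros H; induction t; simpl; try constructor; auto.
  destruct (Nat.eqb x a); auto; constructor.
Qed.

Lemma red_reset_none s : red (Reset s) = None ->
  red s = None /\ is_valb s = false /\ ctrl s = None.
Proof.
  simpl. destruct (red s); [discriminate|]. destruct (is_valb s); [discriminate|].
  destruct (ctrl s) as [[? ?]|]; [discriminate|]. auto.
Qed.

Lemma red_app_none a c : red (App a c) = None ->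
  red a = None /\ (is_valb a = true -> red c = None /\
     (is_valb c = true -> forall b, a <> Lam b)).
Proof.
  simpl. destruct (red a); [discriminate|]. intros H; split; auto.
  intros Ha; rewrite Ha in H. destruct (red c); [discriminate|]. split; auto.
  intros Hc b ->. rewrite Hc in H. discriminate.
Qed.

Lemma L_val s s' : sim s s' -> red s' = None -> is_valb s = is_valb s'.
Proof.
  induction 1; simpl; intros Hr; auto.
  apply red_reset_none in Hr as (H1 & H2 & H3). rewrite IHsim; auto.
Qed.

Lemma L_ctrl s s' : sim s s' -> red s = None -> red s' = None ->
  (forall F b, ctrl s = Some (F, b) -> exists F' b', ctrl s' = Some (F', b') /\ csim F F' /\ sim b b')
  /\ (ctrl s = None -> ctrl s' = None).
Proof.
  induction 1; intros Hr Hr'; simpl; try (split; [intros; discriminate|auto]).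
  -
    destruct (red_app_none _ _ Hr) as [Ra Hb].
    destruct (red_app_none _ _ Hr') as [Ra' Hb'].
    destruct (IHsim1 Ra Ra') as [IA1 IA2].
    assert (Va : is_valb a = is_valb a') by (apply L_val; auto).
    split.
    + intros F b0 Hc. destruct (ctrl a) as [[F1 b1]|] eqn:Ca.
      * inversion Hc; subst. destruct (IA1 _ _ eq_refl) as (F' & bb & -> & HF & Hb0).
        exists (CAppL F' b'), bb. repeat split; auto. constructor; auto.
      * rewrite (IA2 eq_refl). destruct (is_valb a) eqn:Va1; [|discriminate].
        rewrite <- Va. destruct (Hb eq_refl) as [Rb _]. destruct (Hb' (eq_sym Va)) as [Rb' _].
        destruct (IHsim2 Rb Rb') as [IB1 IB2].
        destruct (ctrl b) as [[F2 b2]|] eqn:Cb; [|discriminate].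
        inversion Hc; subst. destruct (IB1 _ _ eq_refl) as (F' & bb & -> & HF & Hb0).
        exists (CAppR a' F'), bb. repeat split; auto. constructor; auto.
    + intros Hc. destruct (ctrl a) as [[F1 b1]|] eqn:Ca; [discriminate|].
      rewrite (IA2 eq_refl). rewrite <- Va. destruct (is_valb a) eqn:Va1; auto.
      destruct (Hb eq_refl) as [Rb _]. destruct (Hb' (eq_sym Va)) as [Rb' _].
      destruct (IHsim2 Rb Rb') as [IB1 IB2].
      destruct (ctrl b) as [[F2 b2]|] eqn:Cb; [discriminate|]. rewrite IB2; auto.
  - split; [|intros; discriminate]. intros F0 b0 Hc; inversion Hc; subst. exists Hole, a'. repeat split; auto. constructor.
  - rewrite (ctrl_val v H); split; [intros; discriminate|auto].
Qed.

Definition star := clos_refl_trans term step.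
Definition plus a b := exists m, step a m /\ star m b.

Lemma star_ctx E : eval_ctx E -> forall a b, star a b -> star (plug E a) (plug E b).
Proof.
  intros HE a b H; induction H.
  - apply rt_step, step_ctx; auto.
  - apply rt_refl.
  - eapply rt_trans; eauto.
Qed.
Lemma plus_ctx E : eval_ctx E -> forall a b, plus a b -> plus (plug E a) (plug E b).
Proof.
  intros HE a b (m & H1 & H2). exists (plug E m). split.
  apply step_ctx; auto. apply star_ctx; auto.
Qed.
Lemma star_trans a b c : star a b -> star b c -> star a c.
Proof. apply rt_trans. Qed.
Lemma star_plus a b c : star a b -> plus b c -> plus a c.
Proof.
  intros H; revert c. apply clos_rt_rt1n in H. induction H; auto.
  intros c Hp. specialize (IHclos_refl_trans_1n c Hp). exists y. split; auto.
  destruct IHclos_refl_trans_1n as (m & H1 & H2). eapply rt_trans; [apply rt_step; eauto|auto].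
Qed.
Lemma plus_star_trans a b c : plus a b -> star b c -> plus a c.
Proof. intros (m & H1 & H2) H3. exists m; split; auto. eapply rt_trans; eauto. Qed.
Lemma step_plus a b : step a b -> plus a b.
Proof. intros H; exists b; split; auto; apply rt_refl. Qed.
Lemma plus_star a b : plus a b -> star a b.
Proof. intros (m & H1 & H2). eapply rt_trans; [apply rt_step|]; eauto. Qed.

Lemma star_appL a a' b : star a a' -> star (App a b) (App a' b).
Proof. apply (star_ctx (CAppL Hole b)); simpl; auto. Qed.
Lemma plus_appL a a' b : plus a a' -> plus (App a b) (App a' b).
Proof. apply (plus_ctx (CAppL Hole b)); simpl; auto. Qed.
Lemma star_appR v b b' : is_valb v = true -> star b b' -> star (App v b) (App v b').
Proof. intros Hv. apply (star_ctx (CAppR v Hole)); simpl; split; auto; apply is_valb_spec; auto. Qed.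
Lemma plus_appR v b b' : is_valb v = true -> plus b b' -> plus (App v b) (App v b').
Proof. intros Hv. apply (plus_ctx (CAppR v Hole)); simpl; split; auto; apply is_valb_spec; auto. Qed.
Lemma star_reset a a' : star a a' -> star (Reset a) (Reset a').
Proof. apply (star_ctx (CReset Hole)); simpl; auto. Qed.
Lemma plus_reset a a' : plus a a' -> plus (Reset a) (Reset a').
Proof. apply (plus_ctx (CReset Hole)); simpl; auto. Qed.

Lemma sim_lam_inv b w : sim (Lam b) w -> is_valb w = true -> exists b', w = Lam b' /\ sim b b'.
Proof. intros H; inversion H; subst; simpl; intros; eauto; discriminate. Qed.
Lemma sim_lam_inv_r a b' : sim a (Lam b') -> exists b, a = Lam b.
Proof. intros H; inversion H; subst; eauto. Qed.
Lemma sim_fvar_inv y w : sim (FVar y) w -> is_valb w = true -> w = FVar y.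
Proof. intros H; inversion H; subst; simpl; intros; auto; discriminate. Qed.

Lemma main s s' : sim s s' ->
  (forall s1, red s = Some s1 -> exists s1', plus s' s1' /\ sim s1 s1') /\
  (red s = None -> exists s'', star s' s'' /\ red s'' = None /\ sim s s'').
Proof.
  induction 1.
  - split; [simpl; intros; discriminate|]. intros; exists (BVar i); split; [apply rt_refl|split; auto; constructor].
  - split; [simpl; intros; discriminate|]. intros; exists (FVar x); split; [apply rt_refl|split; auto; constructor].
  - split; [simpl; intros; discriminate|]. intros; exists (Lam a'); split; [apply rt_refl|split; auto; constructor; auto].
  -
    rename H into Ha, H0 into Hb, IHsim1 into IH1, IHsim2 into IH2. split.
    + intros s1 H. simpl in H. destruct (red a) as [a1|] eqn:Ra.
      * inversion H; subst. destruct (proj1 IH1 _ eq_refl) as (a1' & Hp & Hs).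
        exists (App a1' b'). split. apply plus_appL; auto. apply s_app; auto.
      * destruct (proj2 IH1 eq_refl) as (a'' & Sa & Ra'' & Sa'').
        destruct (is_valb a) eqn:Va; [|discriminate].
        assert (Va'': is_valb a'' = true) by (rewrite <- (L_val _ _ Sa'' Ra''); auto).
        assert (St1: star (App a' b') (App a'' b')) by (apply star_appL; auto).
        destruct (red b) as [b1|] eqn:Rb.
        -- inversion H; subst. destruct (proj1 IH2 _ eq_refl) as (b1' & Hp & Hs).
           exists (App a'' b1'). split. eapply star_plus. exact St1. apply plus_appR; auto.
           apply s_app; auto.
        -- destruct (proj2 IH2 eq_refl) as (b'' & Sb & Rb'' & Sb'').
           destruct (is_valb b) eqn:Vb; [|discriminate].
           assert (Vb'': is_valb b'' = true) by (rewrite <- (L_val _ _ Sb'' Rb''); auto).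
           destruct a as [| |body| | |]; try discriminate. inversion H; subst.
           destruct (sim_lam_inv _ _ Sa'' Va'') as (body'' & -> & Sbody).
           exists (open body'' b''). split.
           ++ eapply star_plus. exact St1. eapply star_plus. apply star_appR. reflexivity. exact Sb.
              apply step_plus. apply red_step. simpl. rewrite (red_val _ Vb''), Vb''. reflexivity.
           ++ apply sim_open; auto.
    + intros H. destruct (red_app_none _ _ H) as [Ra Hb0].
      destruct (proj2 IH1 Ra) as (a'' & Sa & Ra'' & Sa'').
      assert (St1: star (App a' b') (App a'' b')) by (apply star_appL; auto).
      assert (Va'': is_valb a = is_valb a'') by (apply (L_val _ _ Sa'' Ra'')).
      destruct (is_valb a) eqn:Va.
      * destruct (Hb0 eq_refl) as [Rb Hl]. destruct (proj2 IH2 Rb) as (b'' & Sb & Rb'' & Sb'').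
        assert (Vb'': is_valb b = is_valb b'') by (apply (L_val _ _ Sb'' Rb'')).
        exists (App a'' b''). split. eapply star_trans. exact St1. apply star_appR; auto.
        split; [|apply s_app; auto].
        simpl. rewrite Ra'', <- Va'', Rb''. destruct (is_valb b'') eqn:Vb2; auto.
        destruct a'' as [| |body''| | |]; auto. exfalso.
        destruct (sim_lam_inv_r _ _ Sa'') as [bb ->]. apply (Hl Vb'' bb eq_refl).
      * exists (App a'' b'). split; auto. split; [|apply s_app; auto].
        simpl. rewrite Ra'', <- Va''. reflexivity.
  - split; [simpl; intros; discriminate|]. intros; exists (Shift a'); split; [apply rt_refl|split; auto; constructor; auto].
  -
    rename H into Ha, IHsim into IH. split.
    + intros s1 H. simpl in H. destruct (red a) as [a1|] eqn:Ra.
      * inversion H; subst. destruct (proj1 IH _ eq_refl) as (a1' & Hp & Hs).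
        exists (Reset a1'). split. apply plus_reset; auto. apply s_reset; auto.
      * destruct (proj2 IH eq_refl) as (a'' & Sa & Ra'' & Sa'').
        assert (St: star (Reset a') (Reset a'')) by (apply star_reset; auto).
        assert (Va'': is_valb a = is_valb a'') by (apply (L_val _ _ Sa'' Ra'')).
        destruct (is_valb a) eqn:Va.
        -- inversion H; subst. exists a''. split; auto. eapply star_plus; [exact St|].
           apply step_plus, red_step. simpl. rewrite Ra'', <- Va''. reflexivity.
        -- destruct (ctrl a) as [[F b]|] eqn:Ca; [|discriminate]. inversion H; subst.
           destruct (L_ctrl _ _ Sa'' Ra Ra'') as [C1 _].
           destruct (C1 _ _ Ca) as (F' & b' & Ca'' & HF & Hb).
           exists (Reset (open b' (cont_of F'))). split.
           ++ eapply star_plus; [exact St|]. apply step_plus, red_step. simpl.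
              rewrite Ra'', <- Va'', Ca''. reflexivity.
           ++ apply s_reset. apply sim_open; auto. unfold cont_of. apply s_lam, s_reset.
              apply sim_plug; auto. apply sim_refl.
    + intros H. destruct (red_reset_none _ H) as (Ra & Va & Ca).
      destruct (proj2 IH Ra) as (a'' & Sa & Ra'' & Sa'').
      assert (Va'': is_valb a = is_valb a'') by (apply (L_val _ _ Sa'' Ra'')).
      destruct (L_ctrl _ _ Sa'' Ra Ra'') as [_ C2].
      exists (Reset a''). split. apply star_reset; auto. split; [|apply s_reset; auto].
      simpl. rewrite Ra'', <- Va'', Va, (C2 Ca). reflexivity.
  -
    rename H into Ha, IHsim into IH.
    split.
    + intros s1 H. destruct (red a) as [a1|] eqn:Ra.
      * assert (E: red (Reset (App (FVar z) a)) = Some (Reset (App (FVar z) a1)))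
          by (simpl; rewrite Ra; reflexivity).
        rewrite E in H; inversion H; subst. destruct (proj1 IH _ eq_refl) as (a1' & Hp & Hs).
        exists (Reset (App (Kc z) a1')). split. apply plus_reset, plus_appR; auto. apply s_k; auto.
      * destruct (proj2 IH eq_refl) as (a'' & Sa & Ra'' & Sa'').
        assert (St: star (Reset (App (Kc z) a')) (Reset (App (Kc z) a'')))
          by (apply star_reset, star_appR; auto).
        assert (Va'': is_valb a = is_valb a'') by (apply (L_val _ _ Sa'' Ra'')).
        destruct (is_valb a) eqn:Va.
        -- exfalso. assert (E: red (Reset (App (FVar z) a)) = None)
             by (simpl; rewrite Ra, Va, (ctrl_val a Va); reflexivity). congruence.
        -- destruct (ctrl a) as [[F b]|] eqn:Ca.
           ++ assert (E: red (Reset (App (FVar z) a)) = Some (Reset (open b (cont_of (CAppR (FVar z) F)))))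
                by (simpl; rewrite Ra, Va, Ca; reflexivity).
              rewrite E in H; inversion H; subst.
              destruct (L_ctrl _ _ Sa'' Ra Ra'') as [C1 _].
              destruct (C1 _ _ Ca) as (F' & b' & Ca'' & HF & Hb).
              exists (Reset (open b' (cont_of (CAppR (Kc z) F')))). split.
              ** eapply star_plus; [exact St|]. apply step_plus, red_step. simpl.
                 rewrite Ra'', <- Va'', Ca''. reflexivity.
              ** apply s_reset. apply sim_open; auto. unfold cont_of; simpl. apply s_lam, s_k.
                 apply sim_plug; auto. apply sim_refl.
           ++ exfalso. assert (E: red (Reset (App (FVar z) a)) = None)
                by (simpl; rewrite Ra, Va, Ca; reflexivity). congruence.
    + intros H. destruct (red a) as [a1|] eqn:Ra.
      * exfalso. assert (E: red (Reset (App (FVar z) a)) = Some (Reset (App (FVar z) a1)))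
          by (simpl; rewrite Ra; reflexivity). congruence.
      * destruct (proj2 IH eq_refl) as (a'' & Sa & Ra'' & Sa'').
        assert (St: star (Reset (App (Kc z) a')) (Reset (App (Kc z) a'')))
          by (apply star_reset, star_appR; auto).
        assert (Va'': is_valb a = is_valb a'') by (apply (L_val _ _ Sa'' Ra'')).
        destruct (is_valb a) eqn:Va.
        -- exists (Reset (Reset (App (FVar z) a''))). split.
           ++ eapply star_trans; [exact St|]. apply rt_step, red_step. simpl.
              rewrite Ra'', <- Va''. reflexivity.
           ++ split. simpl. rewrite Ra'', <- Va'', (ctrl_val a'' (eq_sym Va'')). reflexivity.
              apply s_rr, s_app; auto; constructor.
        -- destruct (ctrl a) as [[F b]|] eqn:Ca.
           ++ exfalso. assert (E: red (Reset (App (FVar z) a)) = Some (Reset (open b (cont_of (CAppR (FVar z) F)))))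
                by (simpl; rewrite Ra, Va, Ca; reflexivity). congruence.
           ++ destruct (L_ctrl _ _ Sa'' Ra Ra'') as [_ C2].
              exists (Reset (App (Kc z) a'')). split; auto. split; [|apply s_k; auto].
              simpl. rewrite Ra'', <- Va'', (C2 Ca). reflexivity.
  -
    rename H into Ha, IHsim into IH. split.
    + intros s1 H. destruct (red a) as [a1|] eqn:Ra.
      * assert (E: red (Reset a) = Some (Reset a1)) by (simpl; rewrite Ra; reflexivity).
        rewrite E in H; inversion H; subst. destruct (proj1 IH _ eq_refl) as (a1' & Hp & Hs).
        exists (Reset (Reset a1')). split. apply plus_reset, plus_reset; auto. apply s_rr; auto.
      * destruct (proj2 IH eq_refl) as (a'' & Sa & Ra'' & Sa'').
        assert (St: star (Reset (Reset a')) (Reset (Reset a''))) by (apply star_reset, star_reset; auto).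
        assert (Va'': is_valb a = is_valb a'') by (apply (L_val _ _ Sa'' Ra'')).
        destruct (is_valb a) eqn:Va.
        -- assert (E: red (Reset a) = Some a) by (simpl; rewrite Ra, Va; reflexivity).
           rewrite E in H; inversion H; subst. exists (Reset a''). split.
           ++ eapply star_plus; [exact St|]. apply step_plus, red_step. simpl.
              rewrite Ra'', <- Va''. reflexivity.
           ++ apply s_rv; auto.
        -- destruct (ctrl a) as [[F b]|] eqn:Ca.
           ++ assert (E: red (Reset a) = Some (Reset (open b (cont_of F))))
                by (simpl; rewrite Ra, Va, Ca; reflexivity).
              rewrite E in H; inversion H; subst.
              destruct (L_ctrl _ _ Sa'' Ra Ra'') as [C1 _].
              destruct (C1 _ _ Ca) as (F' & b' & Ca'' & HF & Hb).
              exists (Reset (Reset (open b' (cont_of F')))). split.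
              ** eapply star_plus; [exact St|]. apply step_plus, red_step. simpl.
                 rewrite Ra'', <- Va'', Ca''. reflexivity.
              ** apply s_rr. apply sim_open; auto. unfold cont_of. apply s_lam, s_reset.
                 apply sim_plug; auto. apply sim_refl.
           ++ exfalso. assert (E: red (Reset a) = None)
                by (simpl; rewrite Ra, Va, Ca; reflexivity). congruence.
    + intros H. destruct (red_reset_none _ H) as (Ra & Va & Ca).
      destruct (proj2 IH Ra) as (a'' & Sa & Ra'' & Sa'').
      assert (Va'': is_valb a = is_valb a'') by (apply (L_val _ _ Sa'' Ra'')).
      destruct (L_ctrl _ _ Sa'' Ra Ra'') as [_ C2].
      exists (Reset (Reset a'')). split. apply star_reset, star_reset; auto.
      split; [|apply s_rr; auto].
      simpl. rewrite Ra'', <- Va'', Va, (C2 Ca). reflexivity.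
  -
    rename H into Hv, H0 into Hvv, IHsim into IH. split.
    + intros s1 H. rewrite (red_val _ Hv) in H. discriminate.
    + intros _. destruct (proj2 IH (red_val _ Hv)) as (v'' & Sv & Rv'' & Sv'').
      assert (Vv'': is_valb v'' = true) by (rewrite <- (L_val _ _ Sv'' Rv''); auto).
      exists v''. split; auto. eapply star_trans. apply star_reset; eauto.
      apply rt_step, red_step. simpl. rewrite Rv'', Vv''. reflexivity.
Qed.

Fixpoint lcc (n : nat) (E : ctx) : bool :=
  match E with
  | Hole => true
  | CAppR v E => lc_at n v && lcc n E
  | CAppL E u => lcc n E && lc_at n u
  | CReset E => lcc n E
  end.

Lemma lc_plug n E u : lc_at n (plug E u) = lcc n E && lc_at n u.
Proof.
  induction E; simpl; try rewrite IHE; auto.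
  - destruct (lc_at n t), (lcc n E), (lc_at n u); reflexivity.
  - destruct (lc_at n t), (lcc n E), (lc_at n u); reflexivity.
Qed.

Lemma lcc_ccomp n E E' : lcc n (ccomp E E') = lcc n E && lcc n E'.
Proof.
  induction E; simpl; try rewrite IHE; auto.
  - destruct (lc_at n t), (lcc n E), (lcc n E'); reflexivity.
  - destruct (lc_at n t), (lcc n E), (lcc n E'); reflexivity.
Qed.

Lemma lc_mono t : forall m, lc_at m t = true -> lc_at (S m) t = true.
Proof.
  induction t; simpl; intros m H; auto.
  - apply Nat.ltb_lt in H. apply Nat.ltb_lt. lia.
  - apply andb_true_iff in H as [H1 H2]. rewrite IHt1, IHt2; auto.
Qed.

Lemma lc_mono_le n m t : n <= m -> lc_at n t = true -> lc_at m t = true.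
Proof. induction 1; auto. intros; apply lc_mono; auto. Qed.

Lemma lcc_mono E : forall m, lcc m E = true -> lcc (S m) E = true.
Proof.
  induction E; simpl; intros m H; auto;
  repeat match goal with H : _ && _ = true |- _ => apply andb_true_iff in H as [? ?] end;
  repeat rewrite lc_mono; auto; rewrite ?IHE; auto.
Qed.

Lemma lc_open b : forall n u, lc_at (S n) b = true -> lc_at n u = true ->
  lc_at n (open_rec n u b) = true.
Proof.
  induction b; simpl; intros m u H Hu; auto.
  - destruct (Nat.eqb n m) eqn:E; auto. simpl.
    apply Nat.eqb_neq in E. apply Nat.ltb_lt in H. apply Nat.ltb_lt. lia.
  - apply IHb; auto. apply lc_mono; auto.
  - apply andb_true_iff in H as [H1 H2]. rewrite IHb1, IHb2; auto.
  - apply IHb; auto. apply lc_mono; auto.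
Qed.

Lemma lc_cont F : lcc 0 F = true -> lc_at 0 (cont_of F) = true.
Proof. intros H. simpl. rewrite lc_plug. rewrite lcc_mono; auto. Qed.

Lemma red_lc t : forall t', red t = Some t' -> lc t -> lc t'.
Proof.
  unfold lc. induction t; simpl; intros t' H Hl; try discriminate.
  - apply andb_true_iff in Hl as [H1 H2].
    destruct (red t1) as [a|] eqn:R1.
    + inversion H; subst. simpl. rewrite (IHt1 a); auto.
    + destruct (is_valb t1) eqn:V1; [|discriminate].
      destruct (red t2) as [c|] eqn:R2.
      * inversion H; subst. simpl. rewrite (IHt2 c); auto. rewrite H1; auto.
      * destruct (is_valb t2) eqn:V2; [|discriminate].
        destruct t1; try discriminate. inversion H; subst.
        apply lc_open; auto.
  - destruct (red t) as [a|] eqn:R1.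
    + inversion H; subst. simpl. apply IHt; auto.
    + destruct (is_valb t) eqn:V.
      * inversion H; subst. auto.
      * destruct (ctrl t) as [[F b]|] eqn:C; [|discriminate].
        inversion H; subst. destruct (ctrl_spec _ _ _ C) as [-> HP].
        rewrite lc_plug in Hl. apply andb_true_iff in Hl as [H1 H2]. simpl in H2.
        simpl. apply lc_open; auto. apply lc_cont; auto.
Qed.

Lemma star_lc a b : star a b -> lc a -> lc b.
Proof.
  intros H; induction H; auto. apply red_lc. apply step_red; auto.
Qed.
Lemma plus_lc a b : plus a b -> lc a -> lc b.
Proof. intros H. apply star_lc, plus_star; auto. Qed.

Lemma nf_cases t : lc t -> red t = None ->
  is_valb t = true \/ (exists F b, ctrl t = Some (F, b)) \/
  (exists E x v, eval_ctx E /\ is_value v /\ t = plug E (App (FVar x) v)).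
Proof.
  unfold lc. induction t; simpl; intros Hl Hr; auto.
  - apply andb_true_iff in Hl as [H1 H2].
    destruct (red_app_none _ _ Hr) as [R1 Hb].
    destruct (IHt1 H1 R1) as [V1|[(F & b & C1)|(E & x & v & HE & Hv & ->)]].
    + destruct (Hb V1) as [R2 Hl].
      rewrite (ctrl_val _ V1), V1.
      destruct (IHt2 H2 R2) as [V2|[(F & b & C2)|(E & x & v & HE & Hv & ->)]].
      * destruct t1; try discriminate.
        -- right; right. exists Hole, a, t2. simpl; repeat split; auto. apply is_valb_spec; auto.
        -- exfalso; apply (Hl V2 t1 eq_refl).
      * rewrite C2. right; left; eauto.
      * right; right. exists (CAppR t1 E), x, v. simpl. repeat split; auto. apply is_valb_spec; auto.
    + rewrite C1. right; left; eauto.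
    + right; right. exists (CAppL E t2), x, v. simpl. auto.
  - right; left; eauto.
  - destruct (red_reset_none _ Hr) as (R & V & C).
    destruct (IHt Hl R) as [V'|[(F & b & C')|(E & x & v & HE & Hv & ->)]].
    + congruence.
    + congruence.
    + right; right. exists (CReset E), x, v. simpl. auto.
Qed.

Lemma plug_app_not_val E x v : is_valb (plug E (App (FVar x) v)) = false.
Proof. destruct E; reflexivity. Qed.

Lemma ostuck_sim s s' : sim s s' -> red s' = None ->
  forall E x v, eval_ctx E -> is_value v -> s = plug E (App (FVar x) v) ->
  exists E' v', eval_ctx E' /\ is_value v' /\ s' = plug E' (App (FVar x) v') /\
     csim E E' /\ sim v v'.
Proof.
  induction 1; intros Hr E0 x0 v0 HE Hv Heq;
    try (destruct E0; simpl in Heq; discriminate).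
  -
    destruct (red_app_none _ _ Hr) as [Ra' Hb'].
    destruct E0 as [|w E1|E1 c|E1]; simpl in Heq; inversion Heq; subst.
    + assert (Va' : is_valb a' = true) by (rewrite <- (L_val _ _ H Ra'); reflexivity).
      rewrite (sim_fvar_inv _ _ H Va') in *.
      destruct (Hb' eq_refl) as [Rb' _].
      exists Hole, b'. simpl. repeat split; auto; [|constructor].
      apply is_valb_spec. rewrite <- (L_val _ _ H0 Rb'). apply is_valb_spec; auto.
    + destruct HE as [Hw HE1].
      assert (Va' : is_valb a' = true) by (rewrite <- (L_val _ _ H Ra'); apply is_valb_spec; auto).
      destruct (Hb' Va') as [Rb' _].
      destruct (IHsim2 Rb' E1 x0 v0 HE1 Hv eq_refl) as (E' & v' & HE' & Hv' & -> & HC & HS).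
      exists (CAppR a' E'), v'. simpl. repeat split; auto. apply is_valb_spec; auto.
      constructor; auto.
    + destruct (IHsim1 Ra' E1 x0 v0 HE Hv eq_refl) as (E' & v' & HE' & Hv' & -> & HC & HS).
      exists (CAppL E' b'), v'. simpl. repeat split; auto. constructor; auto.
  -
    destruct (red_reset_none _ Hr) as (Ra' & _ & _).
    destruct E0 as [|w E1|E1 c|E1]; simpl in Heq; inversion Heq; subst.
    destruct (IHsim Ra' E1 x0 v0 HE Hv eq_refl) as (E' & v' & HE' & Hv' & -> & HC & HS).
    exists (CReset E'), v'. simpl. repeat split; auto. constructor; auto.
  -
    destruct (red_reset_none _ Hr) as (Ra' & _ & _).
    destruct (red_app_none _ _ Ra') as [_ Hb']. destruct (Hb' eq_refl) as [Ra'' Hl].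
    destruct E0 as [|w E1|E1 c|E1]; simpl in Heq; inversion Heq; subst.
    destruct E1 as [|w E2|E2 c|E2]; simpl in *; inversion H1; subst.
    + exfalso. apply (Hl (eq_trans (eq_sym (L_val _ _ H Ra'')) (proj2 (is_valb_spec _) Hv)) _ eq_refl).
    + destruct HE as [_ HE2].
      destruct (IHsim Ra'' E2 x0 v0 HE2 Hv eq_refl) as (E' & v' & HE' & Hv' & -> & HC & HS).
      exists (CReset (CAppR (Kc z) E')), v'. simpl. repeat split; auto. apply c_k; auto.
    + destruct E2; discriminate.
  -
    destruct (red_reset_none _ Hr) as (Ra' & _ & _).
    destruct (red_reset_none _ Ra') as (Ra'' & _ & _).
    destruct E0 as [|w E1|E1 c|E1]; simpl in Heq; inversion Heq; subst.
    destruct (IHsim Ra'' E1 x0 v0 HE Hv eq_refl) as (E' & v' & HE' & Hv' & -> & HC & HS).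
    exists (CReset (CReset E')), v'. simpl. repeat split; auto. apply c_rr; auto.
  -
    subst. rewrite plug_app_not_val in H. discriminate.
Qed.

Lemma csim_dec E0 E1 : csim E0 E1 -> eval_ctx E0 -> eval_ctx E1 ->
  (pure_ctx E0 /\ pure_ctx E1) \/
  (exists Eo F0 Eo' F1, eval_ctx Eo /\ eval_ctx Eo' /\ pure_ctx F0 /\ pure_ctx F1 /\
     E0 = ccomp Eo (CReset F0) /\ E1 = ccomp Eo' (CReset F1) /\
     (forall y, sim (plug Eo (FVar y)) (plug Eo' (FVar y))) /\
     (forall y, sim (Reset (plug F0 (FVar y))) (Reset (plug F1 (FVar y))))).
Proof.
  induction 1; simpl; intros G0 G1.
  - left; auto.
  - destruct G0 as [Hv HE]; destruct G1 as [Hv' HE'].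
    destruct (IHcsim HE HE') as [[P P']|(Eo & F0 & Eo' & F1 & A & B & C & D & -> & -> & I & J)].
    + left; auto.
    + right. exists (CAppR v Eo), F0, (CAppR v' Eo'), F1. simpl. repeat split; auto.
      intros; constructor; auto.
  - destruct (IHcsim G0 G1) as [[P P']|(Eo & F0 & Eo' & F1 & A & B & C & D & -> & -> & I & J)].
    + left; auto.
    + right. exists (CAppL Eo u), F0, (CAppL Eo' u'), F1. simpl. repeat split; auto.
      intros; constructor; auto.
  - destruct (IHcsim G0 G1) as [[P P']|(Eo & F0 & Eo' & F1 & A & B & C & D & -> & -> & I & J)].
    + right. exists Hole, E, Hole, E'. simpl. repeat split; auto.
      * intros; constructor.
      * intros; constructor. apply sim_plug; auto. constructor.
    + right. exists (CReset Eo), F0, (CReset Eo'), F1. simpl. repeat split; auto.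
      intros; constructor; auto.
  - destruct G0 as [_ HE]; destruct G1 as [_ HE'].
    destruct (IHcsim HE HE') as [[P P']|(Eo & F0 & Eo' & F1 & A & B & C & D & -> & -> & I & J)].
    + right. exists Hole, (CAppR (FVar z) E), Hole, (CAppR (Kc z) E'). simpl. repeat split; auto.
      * intros; constructor.
      * intros; apply s_k. apply sim_plug; auto. constructor.
    + right. exists (CReset (CAppR (FVar z) Eo)), F0, (CReset (CAppR (Kc z) Eo')), F1.
      simpl. repeat split; auto.
      intros; apply s_k; auto.
  - destruct (IHcsim G0 G1) as [[P P']|(Eo & F0 & Eo' & F1 & A & B & C & D & -> & -> & I & J)].
    + right. exists Hole, E, (CReset Hole), E'. simpl. repeat split; auto.
      * intros; apply s_rv; [reflexivity|constructor].
      * intros; constructor. apply sim_plug; auto. constructor.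
    + right. exists (CReset Eo), F0, (CReset (CReset Eo')), F1. simpl. repeat split; auto.
      intros; apply s_rr; auto.
Qed.

Definition RS (a b : term) : Prop := sim a b /\ lc a /\ lc b.

Lemma rnf_mono (R R' : relation_t) : (forall a b, R a b -> R' a b) ->
  forall s t, rnf R s t -> rnf R' s t.
Proof.
  intros HR s t H; destruct H.
  - apply rnf_val. destruct H as (A & B & C). repeat split; auto.
  - apply rnf_open; auto.
    + destruct H1 as [(E0' & F0 & E1' & F1 & A & B & C & D & G & I & J)|(A & B & C)].
      * left. exists E0', F0, E1', F1. repeat split; auto; apply HR; apply J; auto.
      * right. repeat split; auto.
    + destruct H2 as (A & B & C). repeat split; auto.
  - apply rnf_control; auto.
Qed.

Lemma rnf_flip (R : relation_t) s t : rnf R s t -> rnf (fun a b => R b a) t s.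
Proof.
  intros H; destruct H.
  - apply rnf_val. destruct H as (A & B & C). repeat split; auto.
  - apply rnf_open; auto.
    + destruct H1 as [(E0' & F0 & E1' & F1 & A & B & C & D & G & I & J)|(A & B & C)].
      * left. exists E1', F1, E0', F0. repeat split; auto; apply J; auto.
      * right. repeat split; auto.
    + destruct H2 as (A & B & C). repeat split; auto.
  - apply rnf_control; auto.
Qed.

Lemma val_rnf v v' : sim v v' -> is_valb v = true -> is_valb v' = true -> lc v -> lc v' ->
  rnf_value RS v v'.
Proof.
  intros S V V' L L'. split; [apply is_valb_spec; auto|]. split; [apply is_valb_spec; auto|].
  intros x _ _. destruct v; try discriminate.
  - rewrite (sim_fvar_inv _ _ S V'). simpl. split; [apply sim_refl|]. split; reflexivity.
  - destruct (sim_lam_inv _ _ S V') as (b' & -> & Sb). simpl.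
    split. apply sim_open; auto; constructor.
    unfold lc in *; simpl in *. split; apply lc_open; auto.
Qed.

Lemma nf_rnf s s' : sim s s' -> lc s -> lc s' -> red s = None -> red s' = None -> rnf RS s s'.
Proof.
  intros S L L' R R'.
  destruct (nf_cases s L R) as [V|[(F & b & C)|(E & x & v & HE & Hv & ->)]].
  - apply rnf_val. apply val_rnf; auto. rewrite <- (L_val _ _ S R'); auto.
  - destruct (L_ctrl _ _ S R R') as [C1 _]. destruct (C1 _ _ C) as (F' & b' & C' & HF & Hb).
    destruct (ctrl_spec _ _ _ C) as [-> P]. destruct (ctrl_spec _ _ _ C') as [-> P'].
    apply rnf_control; auto. intros k _ _ _ _.
    unfold lc in L, L'. rewrite lc_plug in L, L'. simpl in L, L'.
    apply andb_true_iff in L as [LF Lb]. apply andb_true_iff in L' as [LF' Lb'].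
    split; [|split].
    + apply s_reset. apply sim_open; auto. apply s_lam, s_reset, s_app; [constructor|].
      apply sim_plug; auto; constructor.
    + unfold lc; simpl. apply lc_open; auto. simpl. rewrite lc_plug, lcc_mono; auto.
    + unfold lc; simpl. apply lc_open; auto. simpl. rewrite lc_plug, lcc_mono; auto.
  - destruct (ostuck_sim _ _ S R' E x v HE Hv eq_refl) as (E' & v' & HE' & Hv' & -> & HC & Sv).
    unfold lc in L, L'. rewrite lc_plug in L, L'. simpl in L, L'.
    apply andb_true_iff in L as [LE Lv]. apply andb_true_iff in L' as [LE' Lv'].
    apply rnf_open; auto.
    + destruct (csim_dec _ _ HC HE HE') as [[P P']|(Eo & F0 & Eo' & F1 & A & B & C & D & G & I & J & K)].
      * right. repeat split; auto.
        -- apply sim_plug; auto; constructor.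
        -- unfold lc; rewrite lc_plug, LE; reflexivity.
        -- unfold lc; rewrite lc_plug, LE'; reflexivity.
      * left. exists Eo, F0, Eo', F1. repeat split; auto; subst;
        rewrite lcc_ccomp in LE, LE'; apply andb_true_iff in LE as [LE1 LE2];
        apply andb_true_iff in LE' as [LE1' LE2']; simpl in *; unfold lc; simpl;
        rewrite ?lc_plug, ?LE1, ?LE2, ?LE1', ?LE2'; auto.
    + apply val_rnf; auto; apply is_valb_spec; auto.
Qed.

Inductive nsteps : nat -> term -> term -> Prop :=
| ns0 t : nsteps 0 t t
| nsS n t u v : step t u -> nsteps n u v -> nsteps (S n) t v.

Lemma star_nsteps a b : star a b -> exists n, nsteps n a b.
Proof.
  intros H; apply clos_rt_rt1n in H; induction H.
  - exists 0; constructor.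
  - destruct IHclos_refl_trans_1n as [n Hn]. exists (S n); econstructor; eauto.
Qed.

Lemma det_n m b c : nsteps m b c -> forall n b0, nsteps n b b0 -> red b0 = None ->
  m <= n /\ nsteps (n - m) c b0.
Proof.
  induction 1 as [t|m t u v Hs Hm IH]; intros n b0 Hn Hr.
  - rewrite Nat.sub_0_r. split; auto. lia.
  - inversion Hn as [t0|n' t0 u' v0 Hs' Hn']; subst.
    + apply step_red in Hs. congruence.
    + rewrite (step_det _ _ _ Hs Hs') in *. destruct (IH _ _ Hn' Hr) as [A B].
      split; [lia|]. simpl. auto.
Qed.

Lemma nsteps_irred n c d : nsteps n c d -> red c = None -> c = d.
Proof. intros H; destruct H; auto. intros Hr. apply step_red in H. congruence. Qed.

Lemma star_irred c d : star c d -> red c = None -> c = d.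
Proof. intros H. destruct (star_nsteps _ _ H) as [n Hn]. apply nsteps_irred with n; auto. Qed.

Lemma evaluates_red a b : evaluates a b -> star a b /\ red b = None.
Proof.
  intros [H1 H2]. split; auto. destruct (red b) eqn:E; auto.
  exfalso. apply (H2 t). apply red_step; auto.
Qed.

Lemma red_evaluates a b : star a b -> red b = None -> evaluates a b.
Proof. intros H1 H2. split; auto. apply irred_red; auto. Qed.

Lemma fwd a a0 : clos_refl_trans_1n term step a a0 -> red a0 = None ->
  forall b, RS a b -> exists b0, star b b0 /\ red b0 = None /\ RS a0 b0.
Proof.
  induction 1 as [a|a a1 a0 Hs Hr IH]; intros Hr0 b (Sab0 & La & Lb).
  - destruct (proj2 (main _ _ Sab0) Hr0) as (b'' & Sb & Rb & Sab).
    exists b''. repeat split; auto. eapply star_lc; eauto.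
  - apply step_red in Hs.
    destruct (proj1 (main _ _ Sab0) _ Hs) as (b1 & Pb & Sb1).
    destruct (IH Hr0 b1) as (b0 & Sb0 & Rb0 & HR).
    + repeat split; auto. eapply red_lc; eauto. eapply plus_lc; eauto.
    + exists b0. repeat split; try apply HR; auto. eapply star_trans; [apply plus_star|]; eauto.
Qed.

Lemma bwd n : forall a b b0, nsteps n b b0 -> red b0 = None -> RS a b ->
  exists a0, star a a0 /\ red a0 = None /\ RS a0 b0.
Proof.
  induction n as [n IH] using (well_founded_induction lt_wf).
  intros a b b0 Hn Hr (Sab0 & La & Lb).
  destruct (red a) as [a1|] eqn:Ra.
  - destruct (proj1 (main _ _ Sab0) _ Ra) as (b1 & (m & Hs & Hst) & Sb1).
    destruct (star_nsteps _ _ Hst) as [k Hk].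
    destruct (det_n _ _ _ (nsS _ _ _ _ Hs Hk) _ _ Hn Hr) as [A B].
    destruct (IH (n - S k) ltac:(lia) a1 b1 b0 B Hr) as (a0 & Sa & Ra0 & HR).
    + repeat split; auto. eapply red_lc; eauto. eapply plus_lc; eauto. exists m; auto.
    + exists a0. repeat split; try apply HR; auto. eapply rt_trans; [apply rt_step, red_step; eauto|auto].
  - destruct (proj2 (main _ _ Sab0) Ra) as (b'' & Sb & Rb & Sab).
    destruct (star_nsteps _ _ Sb) as [k Hk].
    destruct (det_n _ _ _ Hk _ _ Hn Hr) as [A B].
    rewrite <- (nsteps_irred _ _ _ B Rb).
    exists a. repeat split; auto. apply rt_refl. eapply star_lc; eauto.
Qed.

Lemma open_close t : forall n u y, lc_at n t = true ->
  open_rec n u (close_rec n y t) = subst y u t.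
Proof.
  induction t; simpl; intros m u y H; auto.
  - destruct (Nat.eqb n m) eqn:E; auto. apply Nat.eqb_eq in E. apply Nat.ltb_lt in H. lia.
  - destruct (Nat.eqb y a); simpl; auto. rewrite Nat.eqb_refl; auto.
  - rewrite IHt; auto.
  - apply andb_true_iff in H as [H1 H2]. rewrite IHt1, IHt2; auto.
  - rewrite IHt; auto.
  - rewrite IHt; auto.
Qed.

Lemma close_notin t : forall n y, ~ In y (fv t) -> close_rec n y t = t.
Proof.
  induction t; simpl; intros m y H; auto.
  - destruct (Nat.eqb y a) eqn:E; auto. apply Nat.eqb_eq in E. subst. tauto.
  - rewrite IHt; auto.
  - rewrite IHt1, IHt2; auto; intro; apply H; apply in_or_app; auto.
  - rewrite IHt; auto.
  - rewrite IHt; auto.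
Qed.

Lemma subst_notin t : forall y u, ~ In y (fv t) -> subst y u t = t.
Proof.
  induction t; simpl; intros y u H; auto.
  - destruct (Nat.eqb y a) eqn:E; auto. apply Nat.eqb_eq in E. subst. tauto.
  - rewrite IHt; auto.
  - rewrite IHt1, IHt2; auto; intro; apply H; apply in_or_app; auto.
  - rewrite IHt; auto.
  - rewrite IHt; auto.
Qed.

Lemma close_plug F : forall n y s, ~ In y (fv_ctx F) ->
  close_rec n y (plug F s) = plug F (close_rec n y s).
Proof.
  induction F; simpl; intros m y s H; auto.
  - rewrite (close_notin t), IHF; auto; intro; apply H; apply in_or_app; auto.
  - rewrite (close_notin t), IHF; auto; intro; apply H; apply in_or_app; auto.
  - rewrite IHF; auto.
Qed.

Lemma subst_plug F : forall y u s, ~ In y (fv_ctx F) ->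
  subst y u (plug F s) = plug F (subst y u s).
Proof.
  induction F; simpl; intros y u s H; auto.
  - rewrite (subst_notin t), IHF; auto; intro; apply H; apply in_or_app; auto.
  - rewrite (subst_notin t), IHF; auto; intro; apply H; apply in_or_app; auto.
  - rewrite IHF; auto.
Qed.

Lemma subst_subst t : forall y u z w, ~ In y (fv t) ->
  subst y u (subst z w t) = subst z (subst y u w) t.
Proof.
  induction t; simpl; intros y u z w H; auto.
  - destruct (Nat.eqb z a); auto. simpl.
    destruct (Nat.eqb y a) eqn:E; auto. apply Nat.eqb_eq in E. subst. tauto.
  - rewrite IHt; auto.
  - rewrite IHt1, IHt2; auto; intro; apply H; apply in_or_app; auto.
  - rewrite IHt; auto.
  - rewrite IHt; auto.
Qed.

Lemma lc_subst t : forall n y u, lc_at n t = true -> lc_at 0 u = true -> lc_at n (subst y u t) = true.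
Proof.
  induction t; simpl; intros m y u H Hu; auto.
  - destruct (Nat.eqb y a); auto. apply (lc_mono_le 0); auto. lia.
  - apply andb_true_iff in H as [H1 H2]. rewrite IHt1, IHt2; auto.
Qed.

Lemma lc_ctx_lcc F : lc_ctx F -> lcc 0 F = true.
Proof.
  induction F; simpl; auto; unfold lc; intros [A B].
  - rewrite A, IHF; auto.
  - rewrite B, IHF; auto.
Qed.

Theorem proposition6 :
  forall (F : ctx) (t : term) (k k' x : atom),
    pure_ctx F -> lc_ctx F -> lc t ->
    ~ In k' (fv_ctx F) -> ~ In k' (fv t) -> ~ In x (fv_ctx F) -> x <> k' ->
    rnf_bisim
      (plug F (shift k t))
      (shift k' (subst k (lam x (Reset (App (FVar k') (plug F (FVar x))))) t)).
Proof.
  intros F t k k' x HF HlF Ht Hk'F Hk't HxF Hxk'.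
  set (W := lam x (Reset (App (FVar k') (plug F (FVar x))))).
  set (L := plug F (shift k t)). set (Rr := shift k' (subst k W t)).
  assert (LF : lcc 0 F = true) by (apply lc_ctx_lcc; auto).
  assert (RL : red L = None) by (apply red_ctrl_plug; auto).
  assert (RR : red Rr = None) by reflexivity.
  assert (SP : rnf RS L Rr).
  { unfold L, Rr, shift.
    change (Shift (close k' (subst k W t))) with (plug Hole (Shift (close k' (subst k W t)))).
    apply rnf_control; [auto|exact I|]. intros k2 _ _ _ _.
    unfold open, close. rewrite (open_close t 0 _ k Ht).
    assert (EW: W = Lam (Reset (App (FVar k') (plug F (BVar 0))))).
    { unfold W, lam, close. simpl. rewrite (proj2 (Nat.eqb_neq x k') Hxk').
      rewrite close_plug; auto. simpl. rewrite Nat.eqb_refl. reflexivity. }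
    assert (LT: lc_at 0 (subst k W t) = true).
    { apply lc_subst; auto. rewrite EW; simpl. rewrite lc_plug, lcc_mono; auto. }
    rewrite (open_close _ 0 _ k' LT). rewrite subst_subst; auto. rewrite EW. simpl.
    rewrite Nat.eqb_refl. rewrite subst_plug; auto. simpl.
    split; [|split].
    - apply s_reset. apply sim_subst. apply s_lam, s_k, sim_refl.
    - unfold lc; simpl. apply lc_subst; auto. simpl. rewrite lc_plug, lcc_mono; auto.
    - unfold lc; simpl. apply lc_subst; auto. simpl. rewrite lc_plug, lcc_mono; auto. }
  assert (SP' : rnf (fun a b => (a = L /\ b = Rr) \/ RS a b) L Rr).
  { apply (rnf_mono RS); auto. }
  exists (fun a b => (a = L /\ b = Rr) \/ RS a b). split; [split|left; auto].
  - intros t0 t1 t0' HR Hev. destruct (evaluates_red _ _ Hev) as [Hst Hr].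
    destruct HR as [[-> ->]|HR].
    + rewrite <- (star_irred _ _ Hst RL). exists Rr. split; auto.
      apply red_evaluates; auto. apply rt_refl.
    + apply clos_rt_rt1n in Hst. destruct (fwd _ _ Hst Hr _ HR) as (b0 & Sb & Rb & HR0).
      exists b0. split. apply red_evaluates; auto.
      apply (rnf_mono RS); auto. destruct HR0 as (A & B & C). apply nf_rnf; auto.
  - intros t0 t1 t0' HR Hev. destruct (evaluates_red _ _ Hev) as [Hst Hr].
    destruct HR as [[-> ->]|HR].
    + rewrite <- (star_irred _ _ Hst RR). exists L. split.
      apply red_evaluates; auto. apply rt_refl.
      apply (rnf_flip (fun a b => (a = L /\ b = Rr) \/ RS a b)); auto.
    + destruct (star_nsteps _ _ Hst) as [n Hn].
      destruct (bwd n _ _ _ Hn Hr HR) as (a0 & Sa & Ra & HR0).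
      exists a0. split. apply red_evaluates; auto.
      apply (rnf_flip (fun a b => (a = L /\ b = Rr) \/ RS a b)).
      apply (rnf_mono RS); auto. destruct HR0 as (A & B & C). apply nf_rnf; auto.
Qed.
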